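(* Let $G$ be a tree with $n\ge k$ vertices and $k\in\{2,3\}$. Then every transition edge between two adjacent configurations of $k$ agents with distinct vertex sets is a $1$-transition edge, and consequently $h^r_k(G)=h_k(G)$.
   Context: All graphs are finite, simple, undirected and connected. A configuration of $k$ agents is a $k$-tuple $(v_1,\dots,v_k)$ of pairwise distinct vertices of $G$ whose induced subgraph is connected; it is identified with its vertex set when convenient. Two configurations $(v_1,\dots,v_k)$, $(v'_1,\dots,v'_k)$ are adjacent if for every $i$ either $v_i=v'_i$ or $(v_i,v'_i)\in E$. The transition edge between adjacent configurations $\mathcal C,\mathcal C'$ is an $r$-transition edge if exactly $r$ vertices of $\mathcal C'$ are not in $\mathcal C$. A transition walk of length $l$ is a sequence $\mathcal C_0,\dots,\mathcal C_l$ of configurations with consecutive ones adjacent; it is spanning if every vertex of $G$ lies in some $\mathcal C_t$. $h_k(G)$ is the minimum length of a spanning transition walk with $k$ agents. $h^r_k(G)$ is the minimum length of a spanning transition walk with $k$ agents in which every pair of consecutive configurations is joined by a $1$-transition edge (the restricted problem $k$-RHWP). *)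

(* Defs.v *)
From mathcomp Require Import all_boot.
Set Implicit Arguments. Unset Strict Implicit. Unset Printing Implicit Defensive.

(* A simple graph: vertex type T : finType, symmetric irreflexive relation e. *)

Definition acyclic (T : finType) (e : rel T) : Prop :=
  forall s : seq T, uniq s -> 3 <= size s -> ~~ cycle e s.

Definition gconnected (T : finType) (e : rel T) : Prop :=
  forall x y : T, connect e x y.

Definition is_tree (T : finType) (e : rel T) : Prop :=
  gconnected e /\ acyclic e.

Definition is_config (T : finType) (e : rel T) (k : nat) (c : k.-tuple T) : Prop :=
  uniq c /\
  forall x y, x \in c -> y \in c ->
    connect [rel a b | [&& e a b, a \in c & b \in c]] x y.

Definition adj_config (T : finType) (e : rel T) (k : nat) (c c' : k.-tuple T) : bool :=
  [forall i : 'I_k, (tnth c i == tnth c' i) || e (tnth c i) (tnth c' i)].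

Definition r_transition (T : finType) (k r : nat) (c c' : k.-tuple T) : Prop :=
  #|[set v in c' | v \notin c]| = r.

(* A transition walk C_0, ..., C_l is given by c0 and the list [C_1;...;C_l];
   its length is l = size s. *)
Definition is_walk (T : finType) (e : rel T) (k : nat)
    (c0 : k.-tuple T) (s : seq (k.-tuple T)) : Prop :=
  (forall c, c \in c0 :: s -> is_config e c) /\ path (@adj_config T e k) c0 s.

Definition spanning (T : finType) (k : nat) (c0 : k.-tuple T) (s : seq (k.-tuple T)) : Prop :=
  forall v : T, exists2 c, c \in c0 :: s & v \in c.

Definition restricted (T : finType) (k : nat) (c0 : k.-tuple T) (s : seq (k.-tuple T)) : Prop :=
  path (fun c c' => #|[set v in c' | v \notin c]| == 1) c0 s.

Definition spanning_len (T : finType) (e : rel T) (k l : nat) : Prop :=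
  exists (c0 : k.-tuple T) (s : seq (k.-tuple T)), [/\ is_walk e c0 s, spanning c0 s & size s = l].

Definition rspanning_len (T : finType) (e : rel T) (k l : nat) : Prop :=
  exists (c0 : k.-tuple T) (s : seq (k.-tuple T)), [/\ is_walk e c0 s, spanning c0 s, restricted c0 s & size s = l].

Definition is_min (P : nat -> Prop) (m : nat) : Prop :=
  P m /\ forall l, P l -> m <= l.

Definition h_is (T : finType) (e : rel T) (k m : nat) : Prop := is_min (spanning_len e k) m.
Definition hr_is (T : finType) (e : rel T) (k m : nat) : Prop := is_min (rspanning_len e k) m.

(* Main.v *)
Require Import Defs.
From mathcomp Require Import all_boot.
From Stdlib Require Import Classical.
Set Implicit Arguments. Unset Strict Implicit.

Lemma dist2 (T : finType) (e : rel T) (k : nat) (c : k.-tuple T) x y :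
  k <= 3 -> is_config e c -> x \in c -> y \in c -> x != y ->
  e x y \/ exists2 w, w \in c & [/\ w != x, w != y, e x w & e w y].
Proof.
move=> hk [Hu Hc] Hx Hy Hxy.
have /connectP [p Hp Hl] := Hc x y Hx Hy.
case: (shortenP Hp) Hl => p' Hp' Hu' Hsub Hl.
have Hin : forall z, z \in p' -> z \in c.
  move=> z /Hsub zp. move: Hp => /(pathP x) Hp'' .
  move: zp; rewrite -[p]/(p) => zp.
  have [i Hi ->] : exists2 i, i < size p & z = nth x p i.
    by exists (index z p); rewrite ?index_mem ?nth_index.
  by have /= /and3P [_ _] := Hp'' i Hi.
have Hsz : size (x :: p') <= 3.
  apply: leq_trans (_ : size c <= 3); last by rewrite size_tuple.
  apply: uniq_leq_size => // z; rewrite inE => /orP [/eqP -> //|]; exact: Hin.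
case: p' Hp' Hu' Hsub Hl Hsz Hin => [|y1 [|y2 [|y3 q]]] //= Hp' Hu' _ Hl _ Hin.
- by move: Hxy; rewrite Hl eqxx.
- left; subst y1; by move: Hp' => /andP [/and3P [] ].
- right; subst y2; exists y1; first by apply: Hin; rewrite inE eqxx.
  move: Hp' => /and3P [/and3P [h1 _ _] /and3P [h2 _ _] _].
  move: Hu'; rewrite !inE !negb_or => /and3P [/andP [a b] c' _].
  by split => //; rewrite eq_sym.
Qed.

Ltac neq_mem H1 H2 := apply/negP => /eqP E; subst; by rewrite H1 in H2.

Lemma noX (T : finType) (e : rel T) (k : nat) (c : k.-tuple T) a b p q :
  symmetric e -> acyclic e -> k <= 3 -> is_config e c ->
  a \in c -> b \in c -> a != b -> p \notin c -> q \notin c -> p != q ->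
  e a p -> e b q -> e p q -> False.
Proof.
move=> Hs Hac hk Hc Ha Hb ab Hp Hq pq eap ebq epq.
have ap : a != p by apply: contraNneq Hp => <-.
have aq : a != q by apply: contraNneq Hq => <-.
have bp : b != p by apply: contraNneq Hp => <-.
have bq : b != q by apply: contraNneq Hq => <-.
case: (dist2 hk Hc Ha Hb ab) => [eab | [w Hw [wa wb eaw ewb]]].
- have := Hac [:: a; p; q; b].
  rewrite /= !inE !negb_or ap aq ab pq (eq_sym p b) bp (eq_sym q b) bq eap epq.
  by rewrite (Hs q) ebq (Hs b) eab => /(_ isT isT).
- have wp : w != p by apply: contraNneq Hp => <-.
  have wq : w != q by apply: contraNneq Hq => <-.
  have := Hac [:: a; p; q; b; w].
  rewrite /= !inE !negb_or ap aq ab pq (eq_sym p b) bp (eq_sym q b) bq eap epq.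
  rewrite (eq_sym a w) wa (eq_sym p w) wp (eq_sym q w) wq (eq_sym b w) wb.
  by rewrite (Hs q) ebq (Hs b) ewb (Hs w) eaw => /(_ isT isT).
Qed.

Lemma noV (T : finType) (e : rel T) (k : nat) (c : k.-tuple T) a b q :
  symmetric e -> acyclic e -> k <= 3 -> is_config e c ->
  a \in c -> b \in c -> a != b -> q \notin c ->
  e a q -> e b q -> False.
Proof.
move=> Hs Hac hk Hc Ha Hb ab Hq eaq ebq.
have aq : a != q by apply: contraNneq Hq => <-.
have bq : b != q by apply: contraNneq Hq => <-.
case: (dist2 hk Hc Ha Hb ab) => [eab | [w Hw [wa wb eaw ewb]]].
- have := Hac [:: a; q; b].
  rewrite /= !inE !negb_or aq ab (eq_sym q b) bq eaq.
  by rewrite (Hs q) ebq (Hs b) eab => /(_ isT isT).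
- have wq : w != q by apply: contraNneq Hq => <-.
  have := Hac [:: a; q; b; w].
  rewrite /= !inE !negb_or aq ab (eq_sym q b) bq eaq.
  rewrite (eq_sym a w) wa (eq_sym q w) wq (eq_sym b w) wb.
  by rewrite (Hs q) ebq (Hs b) ewb (Hs w) eaw => /(_ isT isT).
Qed.

Lemma part1 (T : finType) (e : rel T) (k : nat) (c c' : k.-tuple T) :
  symmetric e -> irreflexive e -> acyclic e -> k <= 3 ->
  is_config e c -> is_config e c' ->
  adj_config e c c' -> [set v in c] != [set v in c'] ->
  r_transition 1 c c'.
Proof.
move=> Hs Hirr Hac hk Hc Hc' /forallP Had Hne; rewrite /r_transition.
have Hedge : forall i, tnth c' i \notin c -> e (tnth c i) (tnth c' i).
  move=> i Hi; case/orP: (Had i) => // /eqP E.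
  by move: Hi; rewrite -E mem_tnth.
case: (ltngtP #|[set v in c' | v \notin c]| 1) => // H.
- exfalso; move: H; rewrite ltnS leqn0 => /eqP /cards0_eq H0.
  move/negP: Hne; apply; rewrite eq_sym eqEcard; apply/andP; split.
  + apply/subsetP => v; rewrite !inE => vc.
    apply/negPn/negP => vnc.
    have : v \in [set v in c' | v \notin c] by rewrite inE vc vnc.
    by rewrite H0 inE.
  + by rewrite !cardsE (card_uniqP (proj1 Hc)) (card_uniqP (proj1 Hc')) !size_tuple.
- exfalso; case/card_gt1P: H => p [q [Hp Hq pq]].
  move: Hp Hq; rewrite !inE => /andP [/tnthP [i Ei] Hpi] /andP [/tnthP [j Ej] Hqj]; subst p q.
  have ij : i != j by apply: contraNneq pq => ->.
  have ai := Hedge i Hpi; have bj := Hedge j Hqj.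
  have ab : tnth c i != tnth c j.
    by apply: contraNneq ij => /(tuple_uniqP _ (proj1 Hc)) ->.
  case: (dist2 hk Hc' (mem_tnth i c') (mem_tnth j c') pq) => [epq | [w Hw [wp wq epw ewq]]].
  + exact: (noX Hs Hac hk Hc (mem_tnth i c) (mem_tnth j c) ab Hpi Hqj pq ai bj epq).
  + case: (boolP (w \in c)) => wc.
    * case: (eqVneq (tnth c i) w) => aw.
      - subst w; exact: (noV Hs Hac hk Hc (mem_tnth i c) (mem_tnth j c) ab Hqj ewq bj).
      - exact: (noV Hs Hac hk Hc (mem_tnth i c) wc aw Hpi ai (ltac:(by rewrite Hs))).
    * case/tnthP: Hw => l El; subst w.
      have il : i != l by apply: contraNneq wp => ->.
      have al : tnth c i != tnth c l.
        by apply: contraNneq il => /(tuple_uniqP _ (proj1 Hc)) ->.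
      exact: (noX Hs Hac hk Hc (mem_tnth i c) (mem_tnth l c) al Hpi wc
               (ltac:(by rewrite eq_sym)) ai (Hedge l wc) epw).
Qed.

Definition relab (T : finType) k (c : k.-tuple T) (s : 'I_k -> 'I_k) : k.-tuple T :=
  [tuple tnth c (s i) | i < k].

Lemma relab_mem (T : finType) k (c : k.-tuple T) s v :
  injective s -> (v \in relab c s) = (v \in c).
Proof.
move=> si; apply/tnthP/tnthP => [[i ->]|[i ->]].
  by exists (s i); rewrite tnth_mktuple.
have /codomP [j ->] := injF_onto si i.
by exists j; rewrite tnth_mktuple.
Qed.

Lemma relab_config (T : finType) (e : rel T) k (c : k.-tuple T) s :
  injective s -> is_config e c -> is_config e (relab c s).
Proof.
move=> si [Hu Hc]; split.
  have /tuple_uniqP tinj := Hu.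
  apply/tuple_uniqP => i j; rewrite !tnth_mktuple => /tinj; exact: si.
move=> x y; rewrite !relab_mem // => hx hy.
rewrite (@eq_connect _ _ [rel a b | [&& e a b, a \in c & b \in c]]); first exact: Hc.
by move=> a b /=; rewrite !relab_mem.
Qed.

Lemma relab_adj (T : finType) (e : rel T) k (c c' : k.-tuple T) s :
  adj_config e c c' -> adj_config e (relab c s) (relab c' s).
Proof. by move/forallP=> H; apply/forallP => i; rewrite !tnth_mktuple. Qed.

Lemma relab_comp (T : finType) k (c : k.-tuple T) s t :
  relab (relab c t) s = relab c (fun i => t (s i)).
Proof. by apply: eq_from_tnth => i; rewrite !tnth_mktuple. Qed.

Lemma same_set (T : finType) k (c0 c1 : k.-tuple T) :
  uniq c1 -> [set v in c0] = [set v in c1] ->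
  exists2 t, injective t & c1 = relab c0 t.
Proof.
move=> Hu1 Heq.
have Hin : forall i, tnth c1 i \in c0.
  move=> i; have : tnth c1 i \in [set v in c1] by rewrite inE mem_tnth.
  by rewrite -Heq inE.
have Hi : forall i, index (tnth c1 i) c0 < k.
  by move=> i; have := size_tuple c0; move=> E; rewrite -[X in _ < X]E index_mem.
have Ht : forall i, tnth c0 (Ordinal (Hi i)) = tnth c1 i.
  by move=> i; rewrite (tnth_nth (tnth c1 i)) /= nth_index.
exists (fun i => Ordinal (Hi i)).
  have /tuple_uniqP tinj := Hu1.
  by move=> i j /(congr1 (tnth c0)); rewrite !Ht => /tinj ->.
by apply: eq_from_tnth => i; rewrite tnth_mktuple Ht.
Qed.

Lemma reduce (T : finType) (e : rel T) k :
  (forall c c' : k.-tuple T, is_config e c -> is_config e c' ->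
     adj_config e c c' -> [set v in c] != [set v in c'] -> r_transition 1 c c') ->
  forall s (c0 : k.-tuple T), is_walk e c0 s ->
  exists2 t, injective t & exists s',
    [/\ is_walk e (relab c0 t) s', restricted (relab c0 t) s', size s' <= size s &
      forall v, (exists2 c, c \in c0 :: s & v \in c) ->
                 exists2 c, c \in relab c0 t :: s' & v \in c].
Proof.
move=> P1; elim=> [|c1 s IH] c0 [Hcf Hp].
  have Hc0 : is_config e c0 by apply: Hcf; rewrite inE eqxx.
  exists id => //; exists [::]; split => //.
    by split => // c; rewrite inE => /eqP ->; apply: relab_config.
  move=> v [c]; rewrite inE => /eqP -> vc; exists (relab c0 id); first by rewrite inE.
  by rewrite relab_mem.
have Hc0 : is_config e c0 by apply: Hcf; rewrite inE eqxx.
have Hc1 : is_config e c1 by apply: Hcf; rewrite !inE eqxx orbT.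
move: Hp => /= /andP [Had Hp].
have [|t ti [s' [[Hcf' Hp'] Hr Hsz Hcov]]] := IH c1.
  by split => // c Hc; apply: Hcf; rewrite inE Hc orbT.
case: (boolP ([set v in c0] == [set v in c1])) => Heq.
- have [u ui Eu] := same_set (proj1 Hc1) (eqP Heq).
  exists (fun i => u (t i)); first exact: inj_comp.
  exists s'; rewrite -relab_comp -Eu; split; first by split.
      by [].
    by apply: leqW.
  move=> v [c]; rewrite inE => /orP [/eqP ->|Hc] vc.
    apply: Hcov; exists c1; first by rewrite inE eqxx.
    by move: (eqP Heq) => /setP /(_ v); rewrite !inE vc.
  by apply: Hcov; exists c.
- exists t => //; exists (relab c1 t :: s'); split => //.
  + split => /=; last by rewrite relab_adj.
    move=> c; rewrite inE => /orP [/eqP ->|]; first exact: relab_config.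
    exact: Hcf'.
  + rewrite /restricted /= Hr andbT.
    have := P1 _ _ Hc0 Hc1 Had Heq; rewrite /r_transition => <-.
    apply/eqP; apply: eq_card => v; rewrite !inE !relab_mem //.
  + move=> v [c]; rewrite !inE => /orP [/eqP ->|Hc] vc.
      by exists (relab c0 t); rewrite ?inE ?eqxx ?relab_mem.
    have [c' Hc' vc'] : exists2 c', c' \in relab c1 t :: s' & v \in c'.
      by apply: Hcov; exists c.
    by exists c' => //; rewrite inE Hc' orbT.
Qed.

Lemma config_hub (T : finType) (e : rel T) k (c : k.-tuple T) a :
  symmetric e -> uniq c -> a \in c ->
  (forall v, v \in c -> [|| v == a, e v a | [exists w, [&& w \in c, e v w & e w a]]]) ->
  is_config e c.
Proof.
move=> Hs Hu Ha H; split => //.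
pose r := [rel u v | [&& e u v, u \in c & v \in c]].
have rs : symmetric r.
  by move=> u v; rewrite /r /= Hs; case: (u \in c); case: (v \in c); rewrite ?andbF ?andbT.
have Hr : forall v, v \in c -> connect r v a.
  move=> v vc; case/or3P: (H v vc) => [/eqP -> //|eva|/existsP [w /and3P [wc evw ewa]]].
    by apply: connect1; rewrite /r /= eva vc Ha.
  apply: (@connect_trans _ _ w); apply: connect1; by rewrite /r /= ?evw ?ewa ?vc ?wc ?Ha.
move=> x y xc yc; rewrite -/r; apply: (@connect_trans _ _ a _ _ (Hr x xc)).
by rewrite (sym_connect_sym rs); apply: Hr.
Qed.

Lemma cover_walk (T : finType) (e : rel T) :
  gconnected e -> forall x, exists s, path e x s /\ forall v, v \in x :: s.
Proof.
move=> Hc x.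
suff H : forall L : seq T, exists s, path e x s /\ {subset L <= x :: s}.
  have [s [Hp Hs]] := H (enum T).
  by exists s; split => // v; apply: Hs; rewrite mem_enum.
elim=> [|v L [s [Hp Hs]]]; first by exists [::].
have /connectP [p Hp2 Hl] := Hc (last x s) v.
exists (s ++ p); split; first by rewrite cat_path Hp.
move=> u; rewrite inE => /orP [/eqP ->|uL].
  rewrite Hl -cat_cons -last_cat mem_last //.
by rewrite -cat_cons mem_cat Hs.
Qed.

Lemma snake2 (T : finType) (e : rel T) :
  symmetric e -> irreflexive e ->
  forall s x y, e x y -> path e y s ->
  exists w : seq (2.-tuple T),
    [/\ forall c, c \in [tuple x; y] :: w -> is_config e c,
        path (@adj_config T e 2) [tuple x; y] w &
        forall v, v \in x :: y :: s -> exists2 c, c \in [tuple x; y] :: w & v \in c].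
Proof.
move=> Hs Hirr.
have Hconf : forall x y, e x y -> is_config e [tuple x; y].
  move=> x y exy; apply: (@config_hub _ _ _ _ y Hs).
  - rewrite /= inE andbT; apply: contraTneq exy => ->; by rewrite Hirr.
  - by rewrite !inE eqxx orbT.
  - by move=> v; rewrite !inE => /orP [/eqP ->|/eqP ->]; rewrite ?exy ?eqxx ?orbT.
elim=> [|z s IH] x y exy /=.
  move=> _; exists [::]; split => //.
    by move=> c; rewrite inE => /eqP ->; apply: Hconf.
  move=> v Hv; exists [tuple x; y]; [exact: mem_head | exact: Hv].
move=> /andP [eyz Hp].
have [w [Hcf Hpw Hcov]] := IH y z eyz Hp.
exists ([tuple y; z] :: w); split.
- move=> c; rewrite inE => /orP [/eqP ->|]; [exact: Hconf | exact: Hcf].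
- rewrite /= Hpw andbT; apply/forallP => i.
  case: i => [[|[|n]]] Hi //=; by rewrite ?exy ?eyz ?orbT.
- move=> v; rewrite inE => /orP [/eqP ->|Hv].
    by exists [tuple x; y]; rewrite ?mem_head.
  have [c Hc vc] := Hcov v Hv.
  by exists c => //; rewrite inE Hc orbT.
Qed.

Lemma config3 (T : finType) (e : rel T) (c : 3.-tuple T) x y z :
  symmetric e -> irreflexive e -> e x y -> z != x -> z != y -> (e z x || e z y) ->
  c =i [:: x; y; z] -> is_config e c.
Proof.
move=> Hs Hirr exy zx zy ez Hm.
have xy : x != y by apply: contraTneq exy => ->; rewrite Hirr.
have Hu : uniq c.
  apply: (@leq_size_uniq _ [:: x; y; z]).
  - by rewrite /= !inE negb_or xy eq_sym zx eq_sym zy.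
  - by move=> v; rewrite Hm.
  - by rewrite size_tuple.
apply: (@config_hub _ _ _ _ y Hs Hu); first by rewrite Hm !inE eqxx orbT.
move=> v; rewrite Hm !inE => /or3P [/eqP ->|/eqP ->|/eqP ->].
- by rewrite exy orbT.
- by rewrite eqxx.
- case/orP: ez => [ezx|ezy]; last by rewrite ezy orbT.
  apply/or3P; apply: Or33; apply/existsP; exists x.
  by rewrite Hm !inE eqxx ezx exy.
Qed.

Lemma snake3 (T : finType) (e : rel T) :
  symmetric e -> irreflexive e ->
  forall s x y z (c : 3.-tuple T), e x y -> z != x -> z != y -> (e z x || e z y) ->
  c =i [:: x; y; z] -> path e y s ->
  exists w : seq (3.-tuple T),
    [/\ forall c', c' \in c :: w -> is_config e c',
        path (@adj_config T e 3) c w &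
        forall v, v \in x :: y :: s -> exists2 c', c' \in c :: w & v \in c'].
Proof.
move=> Hs Hirr.
elim=> [|y' s IH] x y z c exy zx zy ez Hm /=.
  move=> _; exists [::]; split => //.
    by move=> c'; rewrite inE => /eqP ->; apply: (config3 Hs Hirr exy zx zy ez Hm).
  move=> v Hv; exists c; first exact: mem_head.
  by rewrite Hm; move: Hv; rewrite !inE => /orP [->|->]; rewrite ?orbT.
move=> /andP [eyy' Hp].
have xy : x != y by apply: contraTneq exy => ->; rewrite Hirr.
have yy' : y != y' by apply: contraTneq eyy' => ->; rewrite Hirr.
have Hx : x \in c by rewrite Hm mem_head.
suff [w [Hcf Hpw Hcov]] : exists w : seq (3.-tuple T),
   [/\ forall c', c' \in c :: w -> is_config e c',
       path (@adj_config T e 3) c w &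
       forall v, v \in y :: y' :: s -> exists2 c', c' \in c :: w & v \in c'].
  exists w; split => // v; rewrite inE => /orP [/eqP ->|]; last exact: Hcov.
  by exists c; first exact: mem_head.
case: (eqVneq y' x) => [Ey'|y'x].
  subst y'.
  have [w [Hcf Hpw Hcov]] := IH y x z c (ltac:(by rewrite Hs)) zy zx (ltac:(by rewrite orbC)) 
     (ltac:(by move=> v; rewrite Hm !inE; case: (v == x); case: (v == y); case: (v == z))) Hp.
  by exists w.
case: (eqVneq y' z) => [Ey'|y'z].
  subst y'.
  have [w [Hcf Hpw Hcov]] := IH y z x c eyy' xy (ltac:(by rewrite eq_sym)) 
     (ltac:(by rewrite exy))
     (ltac:(by move=> v; rewrite Hm !inE; case: (v == x); case: (v == y); case: (v == z))) Hp.
  by exists w.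
pose g v := if v == y then y' else if v == x then (if e z x then y else x)
            else if v == z then (if e z x then x else y) else v.
pose c' := map_tuple g c.
have Hm' : c' =i [:: y; y'; x].
  move=> v; rewrite /c' /= (eq_mem_map g Hm) /= /g eqxx (negbTE xy) eqxx.
  rewrite (negbTE zy) (negbTE zx) eqxx.
  by case: (e z x); rewrite !inE; case: (v == x); case: (v == y); case: (v == y').
have xy' : x != y' by rewrite eq_sym.
have exy2 : e x y || e x y' by rewrite exy.
have [w [Hcf Hpw Hcov]] := IH y y' x c' eyy' xy xy' exy2 Hm' Hp.
exists (c' :: w); split.
- move=> c2; rewrite inE => /orP [/eqP ->|]; last exact: Hcf.
  exact: (config3 Hs Hirr exy zx zy ez Hm).
- rewrite /= Hpw andbT; apply/forallP => i; rewrite /c' tnth_map.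
  have : tnth c i \in [:: x; y; z] by rewrite -Hm mem_tnth.
  rewrite /g !inE => /or3P [/eqP ->|/eqP ->|/eqP ->].
  + rewrite (negbTE xy) eqxx; case: (boolP (e z x)) => /= _; by rewrite ?eqxx ?exy ?orbT.
  + by rewrite eqxx eyy' orbT.
  + rewrite (negbTE zy) (negbTE zx) eqxx; case: (boolP (e z x)) => ezx.
      by rewrite ezx orbT.
    by move: ez; rewrite (negbTE ezx) /= => ->; rewrite orbT.
- move=> v Hv; have [c2 Hc2 vc2] := Hcov v Hv.
  by exists c2 => //; rewrite inE Hc2 orbT.
Qed.

Lemma ex_min (P : nat -> Prop) n : P n -> exists m, is_min P m.
Proof.
elim: n {-2}n (leqnn n) => [|n IH] l hl Pl.
  move: hl; rewrite leqn0 => /eqP El; subst l.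
  by exists 0; split => // l _.
case: (classic (exists2 l', l' < l & P l')) => [[l' hl' Pl']|H].
  by apply: (IH l') => //; rewrite -ltnS (leq_trans hl' hl).
exists l; split => // l' Pl'; rewrite leqNgt; apply/negP => hl'.
by apply: H; exists l'.
Qed.

Lemma first_out (T : finType) (e : rel T) (P : pred T) :
  forall s a, path e a s -> P a -> (exists2 v, v \in s & ~~ P v) ->
  exists u w, [/\ P u, ~~ P w & e u w].
Proof.
elim=> [|b s IH] a /=; first by move=> _ _ [].
move=> /andP [eab Hp] Pa [v]; rewrite inE => /orP [/eqP ->|vs] Pv.
  by exists a, b.
case: (boolP (P b)) => Pb; last by exists a, b.
by apply: (IH b) => //; exists v.
Qed.

Lemma card_small (T : finType) (s : seq T) : (forall v, v \in s) -> #|T| <= size s.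
Proof.
move=> H; apply: leq_trans (card_size s).
by apply: subset_leq_card; apply/subsetP => v _; apply: H.
Qed.

Theorem mainTheorem4 (T : finType) (e : rel T) (k : nat) :
  symmetric e -> irreflexive e -> is_tree e ->
  (k == 2) || (k == 3) -> k <= #|T| ->
  (forall c c' : k.-tuple T, is_config e c -> is_config e c' ->
     adj_config e c c' -> [set v in c] != [set v in c'] ->
     r_transition 1 c c') /\
  ((exists m, h_is e k m) /\ (forall m, h_is e k m <-> hr_is e k m)).
Proof.
move=> Hs Hirr [Hcon Hac] Hk Hn.
have hk3 : k <= 3 by case/orP: Hk => /eqP ->.
have P1 : forall c c' : k.-tuple T, is_config e c -> is_config e c' ->
     adj_config e c c' -> [set v in c] != [set v in c'] -> r_transition 1 c c'.
  by move=> c c'; apply: part1.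
split => //.
have Hred : forall l, spanning_len e k l -> exists2 l', l' <= l & rspanning_len e k l'.
  move=> l [c0 [s [Hw Hsp Hsz]]].
  have [t ti [s' [Hw' Hr Hsz' Hcov]]] := reduce P1 Hw.
  exists (size s'); first by rewrite -Hsz.
  by exists (relab c0 t), s'; split => // v; apply: Hcov; apply: Hsp.
have Hex : exists l, spanning_len e k l.
  have hk2 : 2 <= k by case/orP: Hk => /eqP ->.
  have : 0 < #|T| by apply: leq_trans Hn; apply: leq_trans hk2.
  case/card_gt0P => x0 _.
  have [s [Hp Hcov]] := cover_walk Hcon x0.
  case: s Hp Hcov => [|x1 s1] Hp Hcov.
    have := card_small Hcov; rewrite /= => h1.
    by have := leq_trans hk2 (leq_trans Hn h1).
  move: Hp => /= /andP [e01 Hp].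
  case/orP: Hk => /eqP Ek; subst k.
  + have [w [Hcf Hpw Hcw]] := @snake2 T e Hs Hirr s1 x0 x1 e01 Hp.
    exists (size w), [tuple x0; x1], w; split; [by split | | by []].
    by move=> v0; apply: Hcw; apply: Hcov.
  + have [v Hv] : exists v, v \notin [:: x0; x1].
      case: (pickP [pred v | v \notin [:: x0; x1]]) => [v Hv|H]; first by exists v.
      have : #|T| <= size [:: x0; x1].
        by apply: card_small => v; have := H v; rewrite /= => /negbFE.
      by rewrite /= leqNgt Hn.
    have [u [z [Pu Pz euz]]] := @first_out T e (mem [:: x0; x1]) (x1 :: s1) x0
        (ltac:(by rewrite /= e01 Hp)) (ltac:(by rewrite /= inE eqxx))
        (ltac:(exists v => //; move: (Hcov v) Hv; rewrite !inE negb_or;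
                 by case: (v == x0) => //= ->)).
    move: Pz Pu; rewrite /= !inE negb_or => /andP [zx0 zx1] Pu.
    have ez : e z x0 || e z x1.
      by case/orP: Pu => /eqP Eu; subst u; rewrite (Hs z x0) (Hs z x1) euz ?orbT.
    have [w [Hcf Hpw Hcw]] :=
      @snake3 T e Hs Hirr s1 x0 x1 z [tuple x0; x1; z] e01 zx0 zx1 ez (fun v => erefl) Hp.
    exists (size w), [tuple x0; x1; z], w; split; [by split | | by []].
    by move=> v0; apply: Hcw; apply: Hcov.
have [m Hm] : exists m, h_is e k m by case: Hex => l Hl; apply: (ex_min Hl).
split; first by exists m.
move=> m'; split.
- move=> [Pm Mm]; split.
    have [l' hl' Pl'] := Hred m' Pm.
    have Sl' : spanning_len e k l'.
      by case: Pl' => c0 [s [Hw Hsp _ Hsz]]; exists c0, s.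
    by have := Mm l' Sl' => h; rewrite (_ : m' = l') // ; apply/eqP; rewrite eqn_leq h hl'.
  move=> l [c0 [s [Hw Hsp _ Hsz]]]; apply: Mm; by exists c0, s.
- move=> [Pm Mm]; split.
    by case: Pm => c0 [s [Hw Hsp _ Hsz]]; exists c0, s.
  move=> l Pl; have [l' hl' Pl'] := Hred l Pl.
  exact: leq_trans (Mm l' Pl') hl'.
Qed.
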